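(* Let $d,d'\in\mathcal D$ with quantities $(\mathbf P,\mathbf r,J_\mu,J_{\mu,\sigma},\mathbf g)$ for $d$ and $(\mathbf P',\mathbf r')$ for $d'$. For $\delta\in[0,1]$ let $\boldsymbol\pi^\delta$, $J^\delta_\mu$, $J^\delta_{\mu,\sigma}$ be the stationary distribution, mean and combined metric of the mixed policy $d^{\delta,d'}$. Then $$J^\delta_{\mu,\sigma}-J_{\mu,\sigma}=\delta\,\boldsymbol\pi^\delta\Big[(\mathbf P'-\mathbf P)\mathbf g+\mathbf r'-\beta(\mathbf r'-J_\mu\mathbf 1)^2_\odot-\mathbf r+\beta(\mathbf r-J_\mu\mathbf 1)^2_\odot\Big]+\beta(J^\delta_\mu-J_\mu)^2 .$$
   Context: Let $\mathcal S=\{1,\dots,S\}$ be a finite state space and $\mathcal A$ a finite action set, with transition probabilities $p^a(i,j)$ ($\sum_j p^a(i,j)=1$) and rewards $r(i,a)\in\mathbb R$. A deterministic stationary policy is a map $d:\mathcal S\to\mathcal A$; $\mathcal D$ is the set of these; $\mathbf P^d$ has entries $p^{d(i)}(i,j)$ and $\mathbf r^d$ has entries $r(i,d(i))$. Standing assumption: every $\mathbf P^d$, $d\in\mathcal D$, is irreducible. For $d$: $\boldsymbol\pi^d$ is the unique stationary distribution (row vector, all entries positive), $J^d_\mu=\boldsymbol\pi^d\mathbf r^d$, and for fixed $\beta>0$, $J^d_{\mu,\sigma}=\boldsymbol\pi^d\mathbf f^d$ with $f^d(i)=r(i,d(i))-\beta(r(i,d(i))-J^d_\mu)^2$; $\mathbf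 g^d$ is any solution of $\mathbf g^d=\mathbf f^d-J^d_{\mu,\sigma}\mathbf 1+\mathbf P^d\mathbf g^d$. Mixed policy: for $d,d'\in\mathcal D$ and $\delta\in[0,1]$, $d^{\delta,d'}$ is the randomized stationary policy which at each visit to state $i$ independently takes action $d(i)$ with probability $1-\delta$ and $d'(i)$ with probability $\delta$. Its transition matrix is $\mathbf P^\delta=\mathbf P+\delta(\mathbf P'-\mathbf P)$ (irreducible, with unique positive stationary distribution $\boldsymbol\pi^\delta$), its mean is $J^\delta_\mu=\boldsymbol\pi^\delta[\mathbf r+\delta(\mathbf r'-\mathbf r)]$, and its combined metric is $J^\delta_{\mu,\sigma}=\boldsymbol\pi^\delta\mathbf f^\delta$ with $f^\delta(i)=(1-\delta)[r(i)-\beta(r(i)-J^\delta_\mu)^2]+\delta[r'(i)-\beta(r'(i)-J^\delta_\mu)^2]$. For a vector $\mathbf v$, $(\mathbf v)^2_\odot$ is its componentwise square. *)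

(* Defs.v *)
From HB Require Import structures.
From mathcomp Require Import all_boot all_order all_algebra.
Set Implicit Arguments. Unset Strict Implicit. Unset Printing Implicit Defensive.
Import Order.TTheory GRing.Theory Num.Theory.
Local Open Scope ring_scope.

Section MDP.
Variable R : realFieldType.

(* States are 'I_n.+1 (S = n+1 >= 1 states). *)

Definition stochastic n (P : 'M[R]_n) : Prop :=
  (forall i j, 0 <= P i j) /\ (forall i, \sum_j P i j = 1).

Definition irreducible n (P : 'M[R]_n.+1) : Prop :=
  forall i j, exists k : nat, 0 < (P ^+ k) i j.

Definition is_stationary n (P : 'M[R]_n) (pi : 'rV[R]_n) : Prop :=
  pi *m P = pi /\ \sum_i pi 0 i = 1 /\ (forall i, 0 <= pi 0 i).

Definition dotv n (u : 'rV[R]_n) (v : 'cV[R]_n) : R := \sum_i u 0 i * v i 0.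

Definition sqv n (v : 'cV[R]_n) : 'cV[R]_n := map_mx (fun x => x ^+ 2) v.

Definition ones n : 'cV[R]_n := const_mx 1.

Variable A : finType.

Definition polP n (p : A -> 'M[R]_n) (d : 'I_n -> A) : 'M[R]_n :=
  \matrix_(i, j) p (d i) i j.

Definition polr n (r : 'I_n -> A -> R) (d : 'I_n -> A) : 'cV[R]_n :=
  \col_i r i (d i).

Definition fvec n (beta J : R) (rv : 'cV[R]_n) : 'cV[R]_n :=
  \col_i (rv i 0 - beta * (rv i 0 - J) ^+ 2).

Definition fmix n (beta delta J : R) (rv rv' : 'cV[R]_n) : 'cV[R]_n :=
  \col_i ((1 - delta) * (rv i 0 - beta * (rv i 0 - J) ^+ 2)
          + delta * (rv' i 0 - beta * (rv' i 0 - J) ^+ 2)).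

End MDP.

(* Main.v *)
Require Import Defs.
From HB Require Import structures.
From mathcomp Require Import all_boot all_order all_algebra.
From mathcomp Require Import ring.
Import Order.TTheory GRing.Theory Num.Theory.
Local Open Scope ring_scope.
Set Implicit Arguments.

Lemma dotvE (R : realFieldType) n (u : 'rV[R]_n) (v : 'cV[R]_n) :
  dotv u v = (u *m v) 0 0.
Proof. rewrite /dotv !mxE. by apply: eq_bigr. Qed.

Lemma dotvD (R : realFieldType) n (u : 'rV[R]_n) (v w : 'cV[R]_n) :
  dotv u (v + w) = dotv u v + dotv u w.
Proof. by rewrite !dotvE mulmxDr mxE. Qed.

Lemma dotvN (R : realFieldType) n (u : 'rV[R]_n) (v : 'cV[R]_n) :
  dotv u (- v) = - dotv u v.
Proof. by rewrite !dotvE mulmxN mxE. Qed.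

Lemma dotvZ (R : realFieldType) n (u : 'rV[R]_n) (a : R) (v : 'cV[R]_n) :
  dotv u (a *: v) = a * dotv u v.
Proof. by rewrite !dotvE -scalemxAr mxE. Qed.

Lemma dotvM (R : realFieldType) n (u : 'rV[R]_n) (M : 'M[R]_n) (v : 'cV[R]_n) :
  dotv u (M *m v) = dotv (u *m M) v.
Proof. by rewrite !dotvE mulmxA. Qed.

Lemma dotv1 (R : realFieldType) n (u : 'rV[R]_n) :
  \sum_i u 0 i = 1 -> dotv u (ones R n) = 1.
Proof. by move=> H; rewrite /dotv -H; apply: eq_bigr => i _; rewrite mxE mulr1. Qed.

Theorem mainTheorem5 (R : realFieldType) (A : finType) (n : nat)
  (p : A -> 'M[R]_n.+1) (r : 'I_n.+1 -> A -> R) (beta : R)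
  (Hp : forall a, stochastic (p a))
  (Hirr : forall d : 'I_n.+1 -> A, irreducible (polP p d))
  (Hbeta : 0 < beta)
  (d d' : 'I_n.+1 -> A)
  (pi : 'rV[R]_n.+1) (Hpi : is_stationary (polP p d) pi)
  (g : 'cV[R]_n.+1)
  (Hg : g = fvec beta (dotv pi (polr r d)) (polr r d)
            - dotv pi (fvec beta (dotv pi (polr r d)) (polr r d)) *: ones R n.+1
            + polP p d *m g)
  (delta : R) (Hdelta : 0 <= delta <= 1)
  (pid : 'rV[R]_n.+1)
  (Hpid : is_stationary (polP p d + delta *: (polP p d' - polP p d)) pid) :
  let P := polP p d in
  let P' := polP p d' in
  let rv := polr r d in
  let rv' := polr r d' in
  let Jmu := dotv pi rv in
  let Jms := dotv pi (fvec beta Jmu rv) in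
  let Jmu_d := dotv pid (rv + delta *: (rv' - rv)) in
  let Jms_d := dotv pid (fmix beta delta Jmu_d rv rv') in
  Jms_d - Jms =
    delta * dotv pid ((P' - P) *m g + rv' - beta *: sqv (rv' - Jmu *: ones R n.+1)
                      - rv + beta *: sqv (rv - Jmu *: ones R n.+1))
    + beta * (Jmu_d - Jmu) ^+ 2.
Proof.
move=> P P' rv rv' Jmu Jms Jmu_d Jms_d.
case: Hpid => [Hst [Hsum _]].
have H1 := @dotv1 _ _ pid Hsum.
set f := fvec beta Jmu rv.
set a := dotv pid ((P' - P) *m g).
have HA : delta * a = dotv pid f - Jms.
  have E1 : dotv pid g = dotv pid (P *m g) + delta * a.
    by rewrite -{1}Hst -dotvM mulmxDl -scalemxAl dotvD dotvZ.
  have E2 : dotv pid g = dotv pid f - Jms + dotv pid (P *m g).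
    by rewrite {1}Hg !dotvD dotvN dotvZ H1 mulr1.
  have -> : delta * a = dotv pid g - dotv pid (P *m g) by rewrite E1; ring.
  rewrite {1}E2; ring.
set sq' := sqv (rv' - Jmu *: ones R n.+1).
set sq := sqv (rv - Jmu *: ones R n.+1).
set W := rv + delta *: (rv' - rv).
have X : fmix beta delta Jmu_d rv rv' - f - delta *: (rv' - beta *: sq' - rv + beta *: sq)
   = (beta * (Jmu_d - Jmu)) *: (2%:R *: W - (Jmu + Jmu_d) *: ones R n.+1).
  apply/matrixP => i j; rewrite (ord1 j) !mxE; ring.
have HX := congr1 (dotv pid) X.
have R1 : dotv pid ((beta * (Jmu_d - Jmu)) *: (2%:R *: W - (Jmu + Jmu_d) *: ones R n.+1))
   = beta * (Jmu_d - Jmu) ^+ 2.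
  rewrite dotvZ dotvD dotvN !dotvZ H1 -/Jmu_d; ring.
rewrite R1 !dotvD !dotvN !dotvZ in HX.
have E : dotv pid (rv' - beta *: sq' - rv + beta *: sq)
  = dotv pid rv' - beta * dotv pid sq' - dotv pid rv + beta * dotv pid sq.
  by rewrite !dotvD !dotvN !dotvZ.
rewrite E in HX.
rewrite !dotvD !dotvN !dotvZ -/a.
have HK : Jms_d - dotv pid f = delta * (dotv pid rv' - beta * dotv pid sq' - dotv pid rv + beta * dotv pid sq) + beta * (Jmu_d - Jmu) ^+ 2.
  rewrite -HX.
  have aux : forall u v w : R, u - v = w + (u - v - w) by move=> *; ring.
  exact: aux.
move: HA HK.
generalize (dotv pid rv') (dotv pid sq') (dotv pid rv) (dotv pid sq) (dotv pid f) a Jms Jms_d Jmu Jmu_d.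
move=> x1 x2 x3 x4 x5 x6 x7 x8 x9 x10 HA HK.
rewrite -(subrK x5 x8) HK.
have -> : delta * (x6 + x1 - beta * x2 - x3 + beta * x4) = delta * x6 + delta * (x1 - beta * x2 - x3 + beta * x4) by ring.
rewrite HA; ring.
Qed.
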